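(* Let $m,n$ be positive integers and $j$ a non-negative integer such that $m\leq n$ and $j<n$. Then \begin{align*} |\mathrm{WHom}^{j}(P_m,P_n)| =&\sum_{t=j+1}^{j+\left\lfloor \frac{m-j-1}{2}\right\rfloor}\ \sum_{s=t-j}^{m-1-t}\left[\binom{m-1}{s,\,t,\,m-1-s-t} - \binom{m-1}{t-j-1,\,s+j+1,\,m-1-s-t}\right]\\ &+\sum_{t=\max\{j-n+m+1,0\}}^{j}\ \sum_{s=0}^{m-1-t}\binom{m-1}{s,\,t,\,m-1-s-t}+\sum_{t=0}^{j-n+m}\ \sum_{s=0}^{n-j-1}\binom{m-1}{s,\,t,\,m-1-s-t}\\ &+\sum_{t=n-j}^{n-j-1+\left\lfloor\frac{j-n+m}{2}\right\rfloor}\ \sum_{s=t-(n-j-1)}^{m-1-t}\left[\binom{m-1}{s,\,t,\,m-1-s-t} - \binom{m-1}{t-n+j,\,s+n-j,\,m-1-s-t}\right]. \end{align*}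
   Context: For a positive integer $n$, $P_n$ denotes the path with vertex set $\{0,1,\dots,n-1\}$ and edge set $\{\{i,i+1\} : i=0,\dots,n-2\}$. A weak homomorphism from a graph $G$ to a graph $H$ is a map $f:V(G)\to V(H)$ such that for every edge $\{x,y\}\in E(G)$, either $f(x)=f(y)$ or $\{f(x),f(y)\}\in E(H)$. $\mathrm{WHom}^{j}(P_m,P_n)$ denotes the set of weak homomorphisms $f:P_m\to P_n$ with $f(0)=j$. The multinomial coefficient $\binom{N}{a,b,c}$ equals $\frac{N!}{a!\,b!\,c!}$ when $a,b,c\ge 0$ and $a+b+c=N$, and is $0$ if any of $a,b,c$ is negative. A sum whose upper limit is smaller than its lower limit is zero. *)

(* Defs.v *)
From mathcomp Require Import all_boot all_order all_algebra.
Set Implicit Arguments. Unset Strict Implicit. Unset Printing Implicit Defensive.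
Import Order.TTheory GRing.Theory Num.Theory.

Definition path_edge (n : nat) : rel 'I_n :=
  fun x y => (x.+1 == y :> nat) || (y.+1 == x :> nat).

Definition weak_hom (m n : nat) (f : {ffun 'I_m -> 'I_n}) : bool :=
  [forall x : 'I_m, forall y : 'I_m,
     path_edge x y ==> ((f x == f y) || path_edge (f x) (f y))].

Definition WHom (j m n : nat) : {set {ffun 'I_m -> 'I_n}} :=
  [set f | weak_hom f && [forall x : 'I_m, (val x == 0%N) ==> (val (f x) == j)]].

Local Open Scope ring_scope.

Definition multinom (N : nat) (a b c : int) : int :=
  if [&& 0 <= a, 0 <= b, 0 <= c & a + b + c == N%:Z] then
    ((N`! %/ ((absz a)`! * (absz b)`! * (absz c)`!))%N)%:Z
  else 0.

Definition zsum (lo hi : int) (F : int -> int) : int :=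
  if lo <= hi then \sum_(0 <= k < absz (hi - lo + 1)) F (lo + k%:Z) else 0.

(* Main.v *)
Require Import Defs.
From mathcomp Require Import all_boot all_order all_algebra.
From mathcomp Require Import zify ring.
Import Order.TTheory GRing.Theory Num.Theory.
Local Open Scope ring_scope.

Definition ind (b : bool) : int := if b then 1 else 0.

Lemma indM a b : ind a * ind b = ind (a && b).
Proof. by case: a; case: b; rewrite /ind ?mul1r ?mul0r. Qed.

Fixpoint T (M a b : nat) : nat :=
  match M with
  | 0 => ((a == 0%N) && (b == 0%N) : nat)
  | M'.+1 => ((if a is a'.+1 then T M' a' b else 0) +
              (if b is b'.+1 then T M' a b' else 0) + T M' a b)%N
  end.

Lemma T_out M a b : (M < a + b)%N -> T M a b = 0%N.
Proof.
elim: M a b => [|M IH] a b /= H.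
  by case: a H => [|a]; case: b => [|b].
rewrite IH; last lia.
case: a H => [|a] H; case: b H => [|b] H //=; rewrite ?IH //; lia.
Qed.

Lemma T_sym M a b : T M a b = T M b a.
Proof.
elim: M a b => [|M IH] a b /=; first by rewrite andbC.
case: a => [|a]; case: b => [|b] //=.
- by move: (IH 0%N b) (IH 0%N b.+1); lia.
- by move: (IH a 0%N) (IH a.+1 0%N); lia.
- by move: (IH a b.+1) (IH a.+1 b) (IH a.+1 b.+1); lia.
Qed.

Lemma T_fact M a b : (a + b <= M)%N -> (T M a b * (a`! * b`! * (M - a - b)`!) = M`!)%N.
Proof.
elim: M a b => [|M IH] a b /= H.
  by case: a H => [|a]; case: b => [|b].
have E1 : ((if a is a'.+1 then T M a' b else 0) * (a`! * b`! * (M.+1 - a - b)`!) = a * M`!)%N.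
  case: a H => [|a] H //=.
  rewrite -(IH a b); last lia.
  have -> : (M.+1 - a.+1 - b = M - a - b)%N by lia.
  rewrite factS; ring.
have E2 : ((if b is b'.+1 then T M a b' else 0) * (a`! * b`! * (M.+1 - a - b)`!) = b * M`!)%N.
  case: b H E1 => [|b] H _ //=.
  rewrite -(IH a b); last lia.
  have -> : (M.+1 - a - b.+1 = M - a - b)%N by lia.
  rewrite factS; ring.
have E3 : (T M a b * (a`! * b`! * (M.+1 - a - b)`!) = (M.+1 - a - b) * M`!)%N.
  case: (leqP (a + b) M) => Hab.
    rewrite -(IH a b) //.
    have -> : (M.+1 - a - b = (M - a - b).+1)%N by lia.
    rewrite factS; ring.
  rewrite T_out //.
  have -> : (M.+1 - a - b = 0)%N by lia.
  by rewrite mul0n.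
rewrite !mulnDl E1 E2 E3 factS; rewrite -!mulnDl; congr (_ * _)%N; lia.
Qed.

Lemma sum_point N (F : nat -> int) u0 :
  (forall u : nat, u != u0 -> F u = 0) ->
  \sum_(u < N) F u = if (u0 < N)%N then F u0 else 0.
Proof.
move=> H; elim: N => [|N IH]; first by rewrite big_ord0.
rewrite big_ord_recr /= IH.
case: (ltnP u0 N) => h.
  rewrite (H N) ?addr0; last by apply/eqP; lia.
  by have -> : (u0 < N.+1)%N by lia.
case: (eqVneq u0 N) => h2.
  by rewrite h2 add0r ltnSn.
rewrite (H N) ?addr0; last by rewrite eq_sym.
by have -> : (u0 < N.+1)%N = false by move/eqP: h2; lia.
Qed.

Lemma multinomE M a b c :
  multinom M a b c = \sum_(u < M.+1) \sum_(v < M.+1)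
    ind [&& a == u%:Z, b == v%:Z & c == M%:Z - u%:Z - v%:Z] * (T M u v)%:Z.
Proof.
rewrite /multinom; case: ifP => Hc.
  case/and4P: Hc; case: a => // a _; case: b => // b _; case: c => // c _ /eqP Habc.
  have Hc : c = (M - a - b)%N by lia.
  rewrite (@sum_point _ (fun u : nat => \sum_(v < M.+1) ind [&& a%:Z == u%:Z, b%:Z == v%:Z & c%:Z == M%:Z - u%:Z - v%:Z] * (T M u v)%:Z) a); last first.
    move=> u Hu; apply: big1 => v _; rewrite /ind; case: ifP; last by rewrite mul0r.
    by case/and3P => /eqP H; exfalso; move/eqP: Hu; lia.
  have -> : (a < M.+1)%N by lia.
  rewrite (@sum_point _ (fun v : nat => ind [&& a%:Z == a%:Z, b%:Z == v%:Z & c%:Z == M%:Z - a%:Z - v%:Z] * (T M a v)%:Z) b); last first.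
    move=> u Hu; rewrite /ind; case: ifP; last by rewrite mul0r.
    by case/and3P => _ /eqP H; exfalso; move/eqP: Hu; lia.
  have -> : (b < M.+1)%N by lia.
  have -> : [&& a%:Z == a%:Z, b%:Z == b%:Z & c%:Z == M%:Z - a%:Z - b%:Z] by apply/and3P; split; apply/eqP; lia.
  rewrite /ind mul1r; congr Posz.
  rewrite -(@T_fact M a b); last lia.
  by rewrite -Hc mulnK // !muln_gt0 !fact_gt0.
symmetry; apply: big1 => u _; apply: big1 => v _.
rewrite /ind; case: ifP; last by rewrite mul0r.
case/and3P => /eqP Ha /eqP Hb /eqP Hcc.
case: (leqP (u + v) M) => Huv.
  exfalso; move: Hc; rewrite Ha Hb Hcc.
  have -> : [&& 0 <= u%:Z, 0 <= v%:Z, 0 <= M%:Z - u%:Z - v%:Z & u%:Z + v%:Z + (M%:Z - u%:Z - v%:Z) == M%:Z] by apply/and4P; split; [lia|lia|lia|apply/eqP; lia].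
  by [].
by rewrite T_out.
Qed.

Lemma eq_zsum lo hi F G : (forall k, F k = G k) -> zsum lo hi F = zsum lo hi G.
Proof. by move=> H; rewrite /zsum; case: ifP => // _; apply: eq_bigr => i _; rewrite H. Qed.

Lemma zsumB lo hi F G : zsum lo hi (fun k => F k - G k) = zsum lo hi F - zsum lo hi G.
Proof. by rewrite /zsum; case: ifP => _; rewrite ?sumrB ?subr0. Qed.

Lemma zsumD lo hi F G : zsum lo hi (fun k => F k + G k) = zsum lo hi F + zsum lo hi G.
Proof. by rewrite /zsum; case: ifP => _; rewrite ?big_split ?addr0. Qed.

Lemma zsum_sum lo hi N (F : int -> 'I_N -> int) :
  zsum lo hi (fun k => \sum_(i < N) F k i) = \sum_(i < N) zsum lo hi (fun k => F k i).
Proof.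
rewrite /zsum; case: ifP => _; first by rewrite exchange_big.
by rewrite big1.
Qed.

Lemma zsum_mulr lo hi F c : zsum lo hi (fun k => F k * c) = zsum lo hi F * c.
Proof. by rewrite /zsum; case: ifP => _; rewrite ?mulr_suml ?mul0r. Qed.

Lemma zsum0 lo hi F : (forall k, F k = 0) -> zsum lo hi F = 0.
Proof. by move=> H; rewrite /zsum; case: ifP => // _; rewrite big1. Qed.

Lemma zsum_point lo hi F k0 : (forall k, k != k0 -> F k = 0) ->
  zsum lo hi F = ind ((lo <= k0) && (k0 <= hi)) * F k0.
Proof.
move=> H; rewrite /zsum; case: ifP => Hle; last first.
  rewrite /ind; case: ifP => [/andP[? ?]|]; last by rewrite mul0r.
  by move/negbT: Hle; rewrite -ltNge; lia.
have key : forall N : nat, \sum_(0 <= k < N) F (lo + k%:Z) =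
     ind ((lo <= k0) && (k0 < lo + N%:Z)) * F k0.
  elim => [|N IH].
    rewrite big_geq // /ind; case: ifP => [/andP[? ?]|]; first lia.
    by rewrite mul0r.
  rewrite big_nat_recr //= IH.
  case: (eqVneq (lo + N%:Z) k0) => h.
    rewrite -h /ind.
    have -> : (lo <= lo + N%:Z) && (lo + N%:Z < lo + N%:Z) = false by lia.
    have -> : (lo <= lo + N%:Z) && (lo + N%:Z < lo + N.+1%:Z) = true by lia.
    by rewrite mul0r add0r mul1r.
  rewrite (H (lo + N%:Z) h) addr0 /ind.
  by have -> : (lo <= k0) && (k0 < lo + N.+1%:Z) = (lo <= k0) && (k0 < lo + N%:Z) by move/eqP: h; lia.
rewrite key; congr (ind _ * _).
have -> : (absz (hi - lo + 1))%:Z = hi - lo + 1 by rewrite abszE ger0_norm //; lia.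
lia.
Qed.

Lemma zsum2_point lo hi (lo' hi' : int -> int) (P : int -> int -> bool) s0 t0 :
  (forall s t, P s t -> s = s0 /\ t = t0) -> P s0 t0 ->
  zsum lo hi (fun t => zsum (lo' t) (hi' t) (fun s => ind (P s t))) =
  ind ((lo <= t0 <= hi) && (lo' t0 <= s0 <= hi' t0)).
Proof.
move=> H H0.
rewrite (@zsum_point _ _ _ t0); last first.
  move=> t Ht; apply: zsum0 => s; rewrite /ind; case: ifP => // /H [_ E].
  by rewrite E eqxx in Ht.
rewrite (@zsum_point _ _ _ s0); last first.
  move=> s Hs; rewrite /ind; case: ifP => // /H [E _].
  by rewrite E eqxx in Hs.
rewrite H0.
by rewrite [ind true]/ind mulr1 indM.
Qed.

Lemma zz_sum lo hi (lo' hi' : int -> int) N (w : int -> int -> 'I_N -> 'I_N -> int) (c : 'I_N -> 'I_N -> int) :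
  zsum lo hi (fun t => zsum (lo' t) (hi' t) (fun s => \sum_(u < N) \sum_(v < N) w s t u v * c u v)) =
  \sum_(u < N) \sum_(v < N) zsum lo hi (fun t => zsum (lo' t) (hi' t) (fun s => w s t u v)) * c u v.
Proof.
rewrite (@eq_zsum _ _ _ (fun t => \sum_(u < N) \sum_(v < N) zsum (lo' t) (hi' t) (fun s => w s t u v) * c u v)); last first.
  move=> t; rewrite (@zsum_sum _ _ N (fun s u => \sum_(v < N) w s t u v * c u v)).
  apply: eq_bigr => u _; rewrite (@zsum_sum _ _ N (fun s v => w s t u v * c u v)).
  apply: eq_bigr => v _.
  by rewrite (@zsum_mulr _ _ (fun s => w s t u v)).
rewrite (@zsum_sum _ _ N (fun t u => \sum_(v < N) zsum (lo' t) (hi' t) (fun s => w s t u v) * c u v)).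
apply: eq_bigr => u _.
rewrite (@zsum_sum _ _ N (fun t v => zsum (lo' t) (hi' t) (fun s => w s t u v) * c u v)).
apply: eq_bigr => v _.
by rewrite (@zsum_mulr _ _ (fun t => zsum (lo' t) (hi' t) (fun s => w s t u v))).
Qed.

Lemma Lterm2 M K lo hi (lo' hi' : int -> int) (p1 q1 p2 q2 : int -> int -> int) :
 zsum lo hi (fun t => zsum (lo' t) (hi' t) (fun s =>
    multinom M (p1 s t) (q1 s t) (K - s - t) - multinom M (p2 s t) (q2 s t) (K - s - t))) =
 \sum_(u < M.+1) \sum_(v < M.+1)
   (zsum lo hi (fun t => zsum (lo' t) (hi' t) (fun s =>
       ind [&& p1 s t == u%:Z, q1 s t == v%:Z & K - s - t == M%:Z - u%:Z - v%:Z]))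
   - zsum lo hi (fun t => zsum (lo' t) (hi' t) (fun s =>
       ind [&& p2 s t == u%:Z, q2 s t == v%:Z & K - s - t == M%:Z - u%:Z - v%:Z]))) * (T M u v)%:Z.
Proof.
rewrite (@eq_zsum _ _ _ (fun t => zsum (lo' t) (hi' t) (fun s => \sum_(u < M.+1) \sum_(v < M.+1)
   (ind [&& p1 s t == u%:Z, q1 s t == v%:Z & K - s - t == M%:Z - u%:Z - v%:Z]
   - ind [&& p2 s t == u%:Z, q2 s t == v%:Z & K - s - t == M%:Z - u%:Z - v%:Z]) * (T M u v)%:Z))); last first.
  move=> t; apply: eq_zsum => s; rewrite !multinomE -sumrB; apply: eq_bigr => u _.
  by rewrite -sumrB; apply: eq_bigr => v _; rewrite mulrBl.
rewrite zz_sum; apply: eq_bigr => u _; apply: eq_bigr => v _; congr (_ * _).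
rewrite -zsumB; apply: eq_zsum => t; by rewrite -zsumB.
Qed.

Lemma Lterm1 M K lo hi (lo' hi' : int -> int) (p1 q1 : int -> int -> int) :
 zsum lo hi (fun t => zsum (lo' t) (hi' t) (fun s => multinom M (p1 s t) (q1 s t) (K - s - t))) =
 \sum_(u < M.+1) \sum_(v < M.+1)
   (zsum lo hi (fun t => zsum (lo' t) (hi' t) (fun s =>
       ind [&& p1 s t == u%:Z, q1 s t == v%:Z & K - s - t == M%:Z - u%:Z - v%:Z]))) * (T M u v)%:Z.
Proof.
rewrite (@eq_zsum _ _ _ (fun t => zsum (lo' t) (hi' t) (fun s => \sum_(u < M.+1) \sum_(v < M.+1)
   (ind [&& p1 s t == u%:Z, q1 s t == v%:Z & K - s - t == M%:Z - u%:Z - v%:Z]) * (T M u v)%:Z))); last first.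
  by move=> t; apply: eq_zsum => s; rewrite !multinomE.
by rewrite zz_sum.
Qed.

Lemma combine_eq N (A0 A1 A2 A3 B c : 'I_N -> 'I_N -> int) :
  (forall u v, c u v = c v u) ->
  (forall u v, c u v != 0 -> A0 u v + A1 u v + A2 u v + A3 v u = B u v) ->
  \sum_(u < N) \sum_(v < N) B u v * c u v =
  \sum_(u < N) \sum_(v < N) A0 u v * c u v + \sum_(u < N) \sum_(v < N) A1 u v * c u v
  + \sum_(u < N) \sum_(v < N) A2 u v * c u v + \sum_(u < N) \sum_(v < N) A3 u v * c u v.
Proof.
move=> Hc H.
have -> : \sum_(u < N) \sum_(v < N) A3 u v * c u v = \sum_(u < N) \sum_(v < N) A3 v u * c u v.
  rewrite exchange_big; apply: eq_bigr => u _; apply: eq_bigr => v _; by rewrite Hc.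
rewrite -!big_split; apply: eq_bigr => u _; rewrite -!big_split; apply: eq_bigr => v _ /=.
case: (eqVneq (c u v) 0) => h; first by rewrite h !mulr0 !addr0.
by rewrite -(H u v h) !mulrDl.
Qed.

Ltac ind_cases := rewrite /ind; repeat (match goal with |- context [if ?b then _ else _] => case: (boolP b) => ? end).

Definition h (n : nat) (k : int) : int :=
  ind ((0 <= k) && (k < n%:Z)) - ind (k <= -2) - ind (n%:Z + 1 <= k).
Definition G (n M : nat) (x : int) : int :=
  \sum_(u < M.+1) \sum_(v < M.+1) h n (x + u%:Z - v%:Z) * (T M u v)%:Z.

Fixpoint wc (n M x : nat) : nat :=
  match M with
  | 0 => 1%N
  | M'.+1 => ((if x is x'.+1 then wc n M' x' else 0) + wc n M' x +
              (if (x.+1 < n)%N then wc n M' x.+1 else 0))%N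
  end.

Lemma G_rec n M x : G n M.+1 x = G n M (x - 1) + G n M x + G n M (x + 1).
Proof.
rewrite /G.
have E : forall u v : 'I_M.+2, h n (x + u%:Z - v%:Z) * (T M.+1 u v)%:Z =
   h n (x + u%:Z - v%:Z) * (if nat_of_ord u is u'.+1 then T M u' v else 0)%:Z
   + h n (x + u%:Z - v%:Z) * (if nat_of_ord v is v'.+1 then T M u v' else 0)%:Z
   + h n (x + u%:Z - v%:Z) * (T M u v)%:Z.
  by move=> u v /=; rewrite !PoszD !mulrDr.
under eq_bigr => u _ do under eq_bigr => v _ do rewrite E.
under eq_bigr => u _ do rewrite !big_split /=.
rewrite !big_split /=.
have S3 : \sum_(u < M.+2) \sum_(v < M.+2) h n (x + u%:Z - v%:Z) * (T M u v)%:Z = G n M x.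
  rewrite big_ord_recr /= [X in _ + X]big1 ?addr0; last first.
    by move=> v _; rewrite T_out ?mulr0 //; lia.
  apply: eq_bigr => u _; rewrite big_ord_recr /= T_out ?mulr0 ?addr0 //; lia.
have S1 : \sum_(u < M.+2) \sum_(v < M.+2) h n (x + u%:Z - v%:Z) *
     (if nat_of_ord u is u'.+1 then T M u' v else 0)%:Z = G n M (x + 1).
  rewrite big_ord_recl /= big1 ?add0r; last by move=> v _; rewrite mulr0.
  apply: eq_bigr => u _; rewrite /= big_ord_recr /= T_out ?mulr0 ?addr0; last lia.
  apply: eq_bigr => v _; congr (h n _ * _); rewrite /bump leq0n add1n; lia.
have S2 : \sum_(u < M.+2) \sum_(v < M.+2) h n (x + u%:Z - v%:Z) *
     (if nat_of_ord v is v'.+1 then T M u v' else 0)%:Z = G n M (x - 1).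
  rewrite big_ord_recr /= [X in _ + X]big1 ?addr0; last first.
    move=> v _; case: (nat_of_ord v) => [|v']; first by rewrite mulr0.
    by rewrite T_out ?mulr0 //; lia.
  apply: eq_bigr => u _; rewrite big_ord_recl /= mulr0 add0r.
  apply: eq_bigr => v _; rewrite /=; congr (h n _ * _); rewrite /bump leq0n add1n; lia.
rewrite S1 S2 S3; ring.
Qed.

Lemma G_bnd n M x : (M <= n)%N -> (x = -1 \/ x = n%:Z) -> G n M x = 0.
Proof.
move=> HM Hx.
have E : G n M x + G n M x = 0.
  rewrite {2}/G exchange_big /=.
  rewrite /G -big_split /=; apply: big1 => u _; rewrite -big_split /=; apply: big1 => v _.
  rewrite (T_sym M v u) -mulrDl.
  case: (leqP (u + v) M) => Huv; last by rewrite T_out // mulr0.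
  rewrite /h /ind.
  have Hu := ltn_ord u; have Hv := ltn_ord v.
  suff -> : (h n (x + u%:Z - v%:Z) + h n (x + v%:Z - u%:Z)) = 0 by rewrite mul0r.
  rewrite /h /ind; repeat case: ifP; lia.
lia.
Qed.

Lemma wc_G n M x : (M <= n)%N -> (x < n)%N -> (wc n M x)%:Z = G n M x%:Z.
Proof.
elim: M x => [|M IH] x HM Hx.
  rewrite /G !big_ord1 /= mulr1 /h /ind.
  ind_cases; lia.
rewrite G_rec /= !PoszD.
congr (_ + _ + _).
- case: x Hx => [|x] Hx.
    by rewrite G_bnd //; [lia | left].
  rewrite IH; [congr (G _ _ _); lia | lia | lia].
- rewrite IH //; lia.
- case: ifP => H.
    rewrite IH //; [congr (G _ _ _); lia | lia].
  rewrite G_bnd //; [lia | right; lia].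
Qed.

Local Open Scope nat_scope.
Set Implicit Arguments. Unset Strict Implicit. Unset Printing Implicit Defensive.

Definition fcons (M n : nat) (a : 'I_n) (g : {ffun 'I_M -> 'I_n}) : {ffun 'I_M.+1 -> 'I_n} :=
  [ffun i => if unlift ord0 i is Some i' then g i' else a].
Definition ftail (M n : nat) (f : {ffun 'I_M.+1 -> 'I_n}) : {ffun 'I_M -> 'I_n} :=
  [ffun i => f (lift ord0 i)].

Lemma fcons0 M n a (g : {ffun 'I_M -> 'I_n}) : fcons a g ord0 = a.
Proof. by rewrite ffunE unlift_none. Qed.
Lemma fconsS M n a (g : {ffun 'I_M -> 'I_n}) i : fcons a g (lift ord0 i) = g i.
Proof. by rewrite ffunE liftK. Qed.
Lemma ftail_cons M n a (g : {ffun 'I_M -> 'I_n}) : ftail (fcons a g) = g.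
Proof. by apply/ffunP => i; rewrite ffunE fconsS. Qed.
Lemma fcons_tail M n (f : {ffun 'I_M.+1 -> 'I_n}) : fcons (f ord0) (ftail f) = f.
Proof.
apply/ffunP => i; rewrite ffunE; case: unliftP => [j ->|->] //.
by rewrite ffunE.
Qed.

Definition wrel n (a b : 'I_n) := (a == b) || path_edge a b.

Lemma weak_hom_cons M n a (g : {ffun 'I_M.+1 -> 'I_n}) :
  weak_hom (fcons a g) = wrel a (g ord0) && weak_hom g.
Proof.
apply/idP/idP.
- move/forallP=> H; apply/andP; split.
    move: (H ord0) => /forallP/(_ (lift ord0 ord0)); rewrite fcons0 fconsS.
    by move/implyP; apply.
  apply/forallP => x; apply/forallP => y; apply/implyP => Hxy.
  move: (H (lift ord0 x)) => /forallP/(_ (lift ord0 y)); rewrite !fconsS.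
  by move/implyP; apply; move: Hxy; rewrite /path_edge /= !eqSS.
- case/andP => Hw /forallP Hg; apply/forallP => x; apply/forallP => y; apply/implyP.
  case: (unliftP ord0 x) => [x' ->|->]; case: (unliftP ord0 y) => [y' ->|->].
  + rewrite !fconsS => Hxy; move: (Hg x') => /forallP/(_ y')/implyP; apply.
    by move: Hxy; rewrite /path_edge /= !eqSS.
  + rewrite fconsS fcons0 => Hxy.
    have Ex : x' = ord0.
      apply/val_inj; move: Hxy; rewrite /path_edge /= /bump leq0n add1n /=; lia.
    rewrite Ex.
    move: Hw; rewrite /wrel /path_edge eq_sym; lia.
  + rewrite fconsS fcons0 => Hxy.
    have -> : y' = ord0 by apply/val_inj; move: Hxy; rewrite /path_edge /= /bump leq0n add1n /=; lia.
    by [].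
  + by rewrite /path_edge.
Qed.

Lemma WHom_in j M n (f : {ffun 'I_M.+1 -> 'I_n}) :
  (f \in WHom j M.+1 n) = weak_hom f && (val (f ord0) == j).
Proof.
rewrite inE; congr (_ && _); apply/forallP/eqP => [H|H x].
  by move/implyP: (H ord0); move/(_ isT)/eqP.
apply/implyP => /eqP x0; have -> : x = ord0 by apply/val_inj.
by rewrite H.
Qed.

Definition wrel_nat (j k : nat) : nat :=
  if (k == j) || (k.+1 == j) || (j.+1 == k) then 1 else 0.

Lemma card_sum_in (I : finType) (A : {set I}) : #|A| = \sum_(i : I) (if i \in A then 1 else 0).
Proof. by rewrite -sum1_card big_mkcond. Qed.

Lemma card_step j M n : (j < n) ->
  #|WHom j M.+2 n| = \sum_(k : 'I_n) wrel_nat j k * #|WHom k M.+1 n|.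
Proof.
move=> hj.
rewrite card_sum_in (reindex (fun p : 'I_n * {ffun 'I_M.+1 -> 'I_n} => fcons p.1 p.2)) /=; last first.
  exists (fun f : {ffun 'I_M.+2 -> 'I_n} => (f ord0, ftail f)) => [[a g]|f] _ /=.
    by rewrite fcons0 ftail_cons.
  by rewrite fcons_tail.
rewrite -(pair_big xpredT xpredT (fun a g => if fcons a g \in WHom j M.+2 n then 1 else 0)) /=.
rewrite (bigD1 (Ordinal hj)) //= [X in _ + X]big1 ?addn0; last first.
  move=> a Ha; apply: big1 => g _; rewrite WHom_in fcons0.
  case: ifP => //; case/andP => _ /eqP E; exfalso; move/eqP: Ha; apply; exact: val_inj.
under [RHS]eq_bigr => k _ do rewrite card_sum_in big_distrr /=.
rewrite exchange_big /=; apply: eq_bigr => g _.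
rewrite (bigD1 (g ord0)) //= [X in _ + X]big1 ?addn0; last first.
  move=> k Hk; rewrite WHom_in.
  case: ifP; rewrite ?muln0 // => /andP[_ /eqP E]; exfalso; move/eqP: Hk; apply; exact: val_inj.
rewrite !WHom_in fcons0 weak_hom_cons /= !eqxx !andbT /wrel /wrel_nat /path_edge /=.
case: (weak_hom g); rewrite ?andbT ?andbF ?muln0 ?muln1 //.
have -> : (Ordinal hj == g ord0) = (j == g ord0 :> nat) by [].
case: ifP; case: ifP => //; lia.
Qed.

Lemma sum_pointn N (F : nat -> nat) u0 :
  (forall u : nat, u != u0 -> F u = 0) ->
  \sum_(u < N) F u = if u0 < N then F u0 else 0.
Proof.
move=> H; elim: N => [|N IH]; first by rewrite big_ord0.
rewrite big_ord_recr /= IH.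
case: (ltnP u0 N) => h.
  rewrite (H N) ?addn0; last by apply/eqP; lia.
  by have -> : (u0 < N.+1) by lia.
case: (eqVneq u0 N) => h2.
  by rewrite h2 add0n ltnSn.
rewrite (H N) ?addn0; last by rewrite eq_sym.
by have -> : (u0 < N.+1) = false by move/eqP: h2; lia.
Qed.

Lemma wc_step n M j : j < n ->
  \sum_(k : 'I_n) wrel_nat j k * wc n M k = wc n M.+1 j.
Proof.
move=> hj.
rewrite (eq_bigr (fun k : 'I_n => ((nat_of_ord k == j) * wc n M k + ((nat_of_ord k).+1 == j) * wc n M k + (j.+1 == nat_of_ord k) * wc n M k))); last first.
  move=> k _; rewrite /wrel_nat; case: ifP; case: (eqVneq (nat_of_ord k) j); case: (eqVneq (nat_of_ord k).+1 j);
  case: (eqVneq j.+1 (nat_of_ord k)) => //=; lia.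
rewrite !big_split /=.
rewrite (@sum_pointn n (fun k => (k == j) * wc n M k) j); last by move=> u /negbTE ->.
rewrite hj eqxx mul1n.
rewrite (@sum_pointn n (fun k => (j.+1 == k) * wc n M k) j.+1); last by move=> u; rewrite eq_sym => /negbTE ->.
rewrite eqxx mul1n.
case: j hj => [|j] hj.
  rewrite big1 //=; first lia.
rewrite (@sum_pointn n (fun k => (k.+1 == j.+1) * wc n M k) j); last by move=> u; rewrite eqSS => /negbTE ->.
rewrite eqxx mul1n /=.
have -> : j < n by lia.
lia.
Qed.

Lemma wc_card n M j : j < n -> #|WHom j M.+1 n| = wc n M j.
Proof.
elim: M j => [|M IH] j hj.
  have -> : WHom j 1 n = [set [ffun _ => Ordinal hj]].
    apply/setP => f; rewrite WHom_in inE.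
    have -> : weak_hom f.
      apply/forallP => x; apply/forallP => y.
      by rewrite (ord1 x) (ord1 y) /path_edge.
    apply/eqP/eqP => [H | ->]; last by rewrite ffunE.
    by apply/ffunP => x; rewrite ffunE (ord1 x); apply/val_inj.
  by rewrite cards1.
rewrite card_step //.
under eq_bigr => k _ do rewrite IH //.
by rewrite wc_step.
Qed.

Local Open Scope ring_scope.

Lemma eqZ (a b : int) : a == b -> a = b :> int.
Proof. by move/eqP. Qed.

Theorem theorem2 (m n j : nat) (hm : (0 < m)%N) (hn : (0 < n)%N)
  (hmn : (m <= n)%N) (hj : (j < n)%N) :
  (#|WHom j m n|%:Z =
     zsum (j%:Z + 1) (j%:Z + ((m%:Z - j%:Z - 1) %/ 2)%Z) (fun t =>
       zsum (t - j%:Z) (m%:Z - 1 - t) (fun s =>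
         multinom m.-1 s t (m%:Z - 1 - s - t)
         - multinom m.-1 (t - j%:Z - 1) (s + j%:Z + 1) (m%:Z - 1 - s - t)))
   + zsum (Num.max (j%:Z - n%:Z + m%:Z + 1) 0) j%:Z (fun t =>
       zsum 0 (m%:Z - 1 - t) (fun s => multinom m.-1 s t (m%:Z - 1 - s - t)))
   + zsum 0 (j%:Z - n%:Z + m%:Z) (fun t =>
       zsum 0 (n%:Z - j%:Z - 1) (fun s => multinom m.-1 s t (m%:Z - 1 - s - t)))
   + zsum (n%:Z - j%:Z) (n%:Z - j%:Z - 1 + ((j%:Z - n%:Z + m%:Z) %/ 2)%Z) (fun t =>
       zsum (t - (n%:Z - j%:Z - 1)) (m%:Z - 1 - t) (fun s =>
         multinom m.-1 s t (m%:Z - 1 - s - t)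
         - multinom m.-1 (t - n%:Z + j%:Z) (s + n%:Z - j%:Z) (m%:Z - 1 - s - t))))%R.
Proof.
case: m hm hmn => // M _ hmn.
rewrite -/(M.+1.-1) [M.+1.-1]/=.
rewrite wc_card // wc_G //; last lia.
rewrite (Lterm2 _ _ _ _ _ _ (fun s t => s) (fun s t => t) (fun s t => t - j%:Z - 1) (fun s t => s + j%:Z + 1)).
rewrite (Lterm1 _ _ _ _ _ _ (fun s t => s) (fun s t => t)).
rewrite (Lterm1 _ _ _ _ _ _ (fun s t => s) (fun s t => t)).
rewrite (Lterm2 _ _ _ _ _ _ (fun s t => s) (fun s t => t) (fun s t => t - n%:Z + j%:Z) (fun s t => s + n%:Z - j%:Z)).
rewrite /G.
apply: (@combine_eq _ _ _ _ _ _ (fun u v : 'I_M.+1 => (T M u v)%:Z)).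
  by move=> u v; rewrite T_sym.
move=> u v Hc.
have Huv : (u + v <= M)%N.
  by case: leqP Hc => // ?; rewrite T_out ?eqxx.
have Hu := ltn_ord u; have Hv := ltn_ord v.
rewrite (zsum2_point _ _ _ _ _ (u%:Z) (v%:Z)); try (by move=> s t /and3P[/eqZ ? /eqZ ? _]; split; lia); try (by apply/and3P; split; apply/eqP => //=; lia).
rewrite (zsum2_point _ _ _ _ _ (v%:Z - j%:Z - 1) (u%:Z + j%:Z + 1)); try (by move=> s t /and3P[/eqZ ? /eqZ ? _]; split; lia); try (by apply/and3P; split; apply/eqP => //=; lia).
rewrite (zsum2_point _ _ _ _ _ (u%:Z) (v%:Z)); try (by move=> s t /and3P[/eqZ ? /eqZ ? _]; split; lia); try (by apply/and3P; split; apply/eqP => //=; lia).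
rewrite (zsum2_point _ _ _ _ _ (u%:Z) (v%:Z)); try (by move=> s t /and3P[/eqZ ? /eqZ ? _]; split; lia); try (by apply/and3P; split; apply/eqP => //=; lia).
rewrite (zsum2_point _ _ _ _ _ (v%:Z) (u%:Z)); try (by move=> s t /and3P[/eqZ ? /eqZ ? _]; split; lia); try (by apply/and3P; split; apply/eqP => //=; lia).
rewrite (zsum2_point _ _ _ _ _ (u%:Z - n%:Z + j%:Z) (v%:Z + n%:Z - j%:Z)); try (by move=> s t /and3P[/eqZ ? /eqZ ? _]; split; lia); try (by apply/and3P; split; apply/eqP => //=; lia).
rewrite /h; ind_cases; lia.
Qed.
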